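(* Let $\kappa$ be a cardinal and let $B$ be the set of elements of order exactly $2$ in the group $(\mathbb{R}/\mathbb{Z})^{\oplus\kappa}$. Then $B$, with the partial operation induced from the group, is strongly IP-regular.
   Context: $(\mathbb{R}/\mathbb{Z})^{\oplus\kappa}$ is the direct sum of $\kappa$ copies of the circle group $\mathbb{R}/\mathbb{Z}$, written additively. A subset $X$ carries the induced partial operation: $x+y$ is defined in $X$ iff $x,y,x+y\in X$. For a sequence $\vec{x}=(x_n)_{n\in\omega}$ in $X$ all of whose finite sums $\sum_{i\in a}x_i$ ($a$ finite nonempty subset of $\omega$) lie in $X$, $\mathrm{FS}(\vec{x})$ is the set of these sums and $\mathrm{FS}_1(\vec{x})=\mathrm{FS}((x_{n+1})_n)$; an IP-set of $X$ is a subset containing such an $\mathrm{FS}(\vec{x})$. $X$ is strongly IP-regular if for every such sequence $\vec{x}$, $x_0+\mathrm{FS}_1(\vec{x})$ is not an IP-set. *)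

(* Defs.v *)
From Stdlib Require Import Reals List.
Import ListNotations.
Open Scope R_scope.

(* The circle group R/Z is represented by the canonical representatives in
   [0,1), with addition  a (+) b = frac_part (a + b).
   The direct sum (R/Z)^{(+) kappa} over an index type I (of cardinality kappa)
   is represented by functions f : I -> R with values in [0,1) and finite
   support; the group operation is coordinatewise. *)

Definition circ_add (a b : R) : R := frac_part (a + b).

Definition DS (I : Type) (f : I -> R) : Prop :=
  (forall i, 0 <= f i < 1) /\ exists l : list I, forall i, f i <> 0 -> In i l.

Definition ds_zero (I : Type) : I -> R := fun _ => 0.

Definition ds_add (I : Type) (f g : I -> R) : I -> R := fun i => circ_add (f i) (g i).

Definition order2 (I : Type) (f : I -> R) : Prop :=
  DS I f /\ f <> ds_zero I /\ ds_add I f f = ds_zero I.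

(* Finite sums of a sequence x indexed by a finite set a of naturals,
   given as a duplicate-free list. *)
Definition fsum (I : Type) (x : nat -> I -> R) (a : list nat) : I -> R :=
  fold_right (fun n acc => ds_add I (x n) acc) (ds_zero I) a.

Definition FS_in (I : Type) (X : (I -> R) -> Prop) (x : nat -> I -> R) : Prop :=
  forall a : list nat, a <> [] -> NoDup a -> X (fsum I x a).

Definition FS (I : Type) (x : nat -> I -> R) (s : I -> R) : Prop :=
  exists a : list nat, a <> [] /\ NoDup a /\ s = fsum I x a.

Definition IPset (I : Type) (X A : (I -> R) -> Prop) : Prop :=
  (forall s, A s -> X s) /\
  exists y : nat -> I -> R, FS_in I X y /\ forall s, FS I y s -> A s.

Definition strongly_IP_regular (I : Type) (X : (I -> R) -> Prop) : Prop :=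
  forall x : nat -> I -> R, FS_in I X x ->
    ~ IPset I X (fun s => exists t, FS I (fun n => x (S n)) t /\ s = ds_add I (x O) t).

(* Main.v *)
Require Import Defs.
From Stdlib Require Import Reals List Lra Lia ZArith FunctionalExtensionality.
Import ListNotations.
Open Scope R_scope.

Definition isZ (r : R) : Prop := exists k : Z, r = IZR k.

Ltac zsolve := repeat (rewrite plus_IZR || rewrite minus_IZR || rewrite opp_IZR || rewrite mult_IZR); lra.

Lemma isZ_int01 r : isZ r -> 0 <= r < 1 -> r = 0.
Proof.
  intros [k ->] [H1 H2].
  apply le_IZR in H1. apply lt_IZR in H2.
  assert (k = 0%Z) by lia. subst. reflexivity.
Qed.

Fixpoint rsum (I : Type) (x : nat -> I -> R) (l : list nat) (i : I) : R :=
  match l with [] => 0 | n :: t => x n i + rsum I x t i end.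

Lemma rsum_app I x u v i : rsum I x (u ++ v) i = rsum I x u i + rsum I x v i.
Proof. induction u; simpl; [lra|rewrite IHu; lra]. Qed.

Lemma rsum_map I x a i : rsum I x (map S a) i = rsum I (fun n => x (S n)) a i.
Proof. induction a; simpl; auto. rewrite IHa; auto. Qed.

Lemma ds_add_eqZ I f g i : isZ (ds_add I f g i - f i - g i).
Proof.
  unfold ds_add, circ_add, frac_part. exists (- Int_part (f i + g i))%Z. zsolve.
Qed.

Lemma fsum_eqZ I x l i : isZ (fsum I x l i - rsum I x l i).
Proof.
  induction l as [|n t IH]; simpl.
  - exists 0%Z. unfold ds_zero. simpl. lra.
  - destruct IH as [k Hk]. destruct (ds_add_eqZ I (x n) (fsum I x t) i) as [k2 Hk2].
    exists (k + k2)%Z. zsolve.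
Qed.

Lemma fsum_range I x l i : 0 <= fsum I x l i < 1.
Proof.
  destruct l; simpl.
  - unfold ds_zero; lra.
  - unfold ds_add, circ_add. destruct (base_fp (x n i + fsum I x l i)). lra.
Qed.

Lemma order2_twice I f i : order2 I f -> isZ (f i + f i).
Proof.
  intros [_ [_ H]]. assert (H' := f_equal (fun g => g i) H). simpl in H'.
  unfold ds_add, circ_add, frac_part, ds_zero in H'.
  exists (Int_part (f i + f i)). lra.
Qed.

Lemma reduce I x (H2 : forall n i, isZ (x n i + x n i)) (l : list nat) :
  exists l', NoDup l' /\
    (forall m, In m l' <-> Nat.odd (count_occ Nat.eq_dec l m) = true) /\
    forall i, isZ (rsum I x l i - rsum I x l' i).
Proof.
  induction l as [|n t IH].
  - exists []. split; [constructor|split].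
    + intros m; simpl. split; [tauto|discriminate].
    + intros i; exists 0%Z; simpl; lra.
  - destruct IH as [t' [Hnd [Hin Hs]]].
    destruct (in_dec Nat.eq_dec n t') as [Hn|Hn].
    + destruct (in_split _ _ Hn) as [u [v Huv]]. subst t'.
      exists (u ++ v). split; [eapply NoDup_remove_1; eauto|split].
      * intros m. destruct (Nat.eq_dec n m) as [<-|Hne].
        -- rewrite count_occ_cons_eq by reflexivity. rewrite Nat.odd_succ, <- Nat.negb_odd.
           rewrite (proj1 (Hin n) Hn). simpl.
           split; [intro Hc; exfalso; eapply NoDup_remove_2; eauto|intro Hf; discriminate Hf].
        -- rewrite count_occ_cons_neq by exact Hne. rewrite <- Hin.
           rewrite !in_app_iff. simpl. intuition.
      * intros i. destruct (Hs i) as [k Hk]. destruct (H2 n i) as [k2 Hk2].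
        exists (k + k2)%Z. simpl. rewrite rsum_app in *. simpl in Hk. zsolve.
    + exists (n :: t'). split; [constructor; auto|split].
      * intros m. destruct (Nat.eq_dec n m) as [<-|Hne].
        -- rewrite count_occ_cons_eq by reflexivity. rewrite Nat.odd_succ, <- Nat.negb_odd.
           destruct (Nat.odd (count_occ Nat.eq_dec t n)) eqn:E.
           ++ exfalso. apply Hn. apply Hin. exact E.
           ++ simpl. tauto.
        -- rewrite count_occ_cons_neq by exact Hne. rewrite <- Hin. simpl. intuition.
      * intros i. destruct (Hs i) as [k Hk]. exists k. simpl. lra.
Qed.

Theorem mainTheorem8 (I : Type) : strongly_IP_regular I (order2 I).
Proof.
  intros x Hx [_ [y [Hy HA]]].
  set (x' := fun n => x (S n)).
  assert (Hxs : forall n i, isZ (x n i + x n i)).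
  { intros n i. assert (Ho := Hx [n] ltac:(discriminate) (NoDup_cons _ (@in_nil _ _) (NoDup_nil _))).
    destruct (order2_twice I _ i Ho) as [k Hk].
    destruct (fsum_eqZ I x [n] i) as [k2 Hk2]. cbn [rsum] in Hk2.
    exists (k - k2 - k2)%Z. zsolve. }
  assert (Hys : forall n i, isZ (y n i + y n i)).
  { intros n i. assert (Ho := Hy [n] ltac:(discriminate) (NoDup_cons _ (@in_nil _ _) (NoDup_nil _))).
    destruct (order2_twice I _ i Ho) as [k Hk].
    destruct (fsum_eqZ I y [n] i) as [k2 Hk2]. cbn [rsum] in Hk2.
    exists (k - k2 - k2)%Z. zsolve. }
  assert (Hget : forall b, b <> [] -> NoDup b -> exists a, a <> [] /\ NoDup a /\
     forall i, isZ (rsum I y b i - x O i - rsum I x' a i)).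
  { intros b Hb Hnb. destruct (HA (fsum I y b)) as [t [[a [Ha [Hna ->]]] Ht]].
    { exists b. auto. }
    exists a. split; [auto|split;[auto|]]. intros i.
    destruct (fsum_eqZ I y b i) as [k1 H1].
    destruct (fsum_eqZ I x' a i) as [k2 H2'].
    rewrite Ht in H1. destruct (ds_add_eqZ I (x O) (fsum I x' a) i) as [k3 H3].
    unfold x' in *. exists (k3 - k1 + k2)%Z. zsolve. }
  assert (N01 : NoDup [0%nat; 1%nat]).
  { constructor. simpl; intuition discriminate. exact (NoDup_cons _ (@in_nil _ _) (NoDup_nil _)). }
  destruct (Hget [0%nat] ltac:(discriminate) (NoDup_cons _ (@in_nil _ _) (NoDup_nil _))) as [a0 [_ [_ E0]]].
  destruct (Hget [1%nat] ltac:(discriminate) (NoDup_cons _ (@in_nil _ _) (NoDup_nil _))) as [a1 [_ [_ E1]]].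
  destruct (Hget [0%nat; 1%nat] ltac:(discriminate) N01) as [a2 [_ [_ E2]]].
  set (l := 0%nat :: map S (a0 ++ a1 ++ a2)).
  destruct (reduce I x Hxs l) as [l' [Hnd [Hin Hs]]].
  assert (H0 : In 0%nat l').
  { apply Hin. unfold l. rewrite count_occ_cons_eq by reflexivity.
    assert (count_occ Nat.eq_dec (map S (a0 ++ a1 ++ a2)) 0%nat = 0%nat) as ->.
    { apply count_occ_not_In. intros Hc. apply in_map_iff in Hc.
      destruct Hc as [? [? _]]; discriminate. }
    reflexivity. }
  assert (Hne : l' <> []) by (intros ->; destruct H0).
  destruct (Hx l' Hne Hnd) as [_ [Hnz _]]. apply Hnz.
  extensionality i. unfold ds_zero.
  apply isZ_int01; [|apply fsum_range].
  destruct (Hs i) as [k1 K1]. destruct (fsum_eqZ I x l' i) as [k2 K2].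
  destruct (E0 i) as [e0 F0]. destruct (E1 i) as [e1 F1]. destruct (E2 i) as [e2 F2].
  destruct (Hxs O i) as [z0 Z0]. destruct (Hys O i) as [z1 Z1]. destruct (Hys 1%nat i) as [z2 Z2].
  unfold l in K1. cbn [rsum] in K1. rewrite rsum_map, !rsum_app in K1. cbn [rsum] in F0, F1, F2.
  fold x' in K1.
  unfold x' in *. exists (k2 - k1 - e0 - e1 - e2 + z1 + z2 - z0)%Z. zsolve.
Qed.
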